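(* Consider the following discrete-time individual-based colonisation model. There are $N$ individuals and time-steps $t\in\{0,1,\dots,T\}$ of length $\Delta>0$. Let $\bm{X}=(x_{t,j})$, $t\in\{0,\dots,T\}$, $j\in\{1,\dots,N\}$, with $x_{t,j}\in\{0,1\}$ ($1$ = colonised, $0$ = uncolonised), and write $\bm{x}_{t}=(x_{t,1},\dots,x_{t,N})$. Fix parameters $\bm{\theta}$, a known de-colonisation rate $\gamma>0$, an initial colonisation probability $p_0\in(0,1)$, and colonisation pressures $\lambda_j(t,\bm{x}_{t-1},\bm{\theta})>0$. The prior (transmission) model is: independently for each $j$, $x_{0,j}\sim\mathrm{Bernoulli}(p_0)$, and recursively for $t\ge 1$, $x_{t,j}\mid \bm{\theta},\bm{x}_{t-1}\sim \mathrm{Bernoulli}(1-e^{-\lambda_j(t,\bm{x}_{t-1},\bm{\theta})\Delta})$ if $x_{t-1,j}=0$ and $\sim\mathrm{Bernoulli}(e^{-\gamma\Delta})$ if $x_{t-1,j}=1$; denote its probability mass function by $\pi(\bm{X}\mid\bm{\theta})$. Observations $\bm{Y}=(y_{t,j})$ are given, for the tested pairs $(t,j)$, by independent $y_{t,j}\mid x_{t,j}\sim \mathrm{Bernoulli}(s_e)$ if $x_{t,j}=1$ and $\sim\mathrm{Bernoulli}(1-s_p)$ if $x_{t,j}=0$, with known $s_e,s_p\in[0,1]$; denote the likelihood by $\pi(\bm{Y}\mid\bm{X},\bm{\theta})$, and let $\pi(\bm{X}\mid\bm{\theta},\bm{Y})\propto \pi(\bm{Y}\mid\bm{X},\bm{\theta})\pi(\bm{X}\mid\bm{\theta})$.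 Let $p_{CU}=1-e^{-\gamma\Delta}$. For a matrix $\bm{U}=(u_{t,j})\in(0,1)^{(T+1)\times N}$ define the deterministic map $\bm{X}=f(\bm{U},\bm{\theta})$ by: $x_{0,j}=1$ iff $u_{0,j}<p_0$; and for $t=1,\dots,T$ (in increasing order), if $x_{t-1,j}=0$ then $x_{t,j}=1$ iff $u_{t,j}<1-e^{-\lambda_j(t,\bm{x}_{t-1},\bm{\theta})\Delta}$, while if $x_{t-1,j}=1$ then $x_{t,j}=0$ iff $u_{t,j}<p_{CU}$. For a state $\bm{X}$ define bounds $(a_{t,j},b_{t,j})$ by: $(0,p_0)$ if $x_{0,j}=1$ and $(p_0,1)$ if $x_{0,j}=0$ (for $t=0$); and for $t\ge1$, with $p_{UC}=1-e^{-\lambda_j(t,\bm{x}_{t-1},\bm{\theta})\Delta}$: $(0,p_{UC})$ if $(x_{t-1,j},x_{t,j})=(0,1)$, $(p_{UC},1)$ if $(0,0)$, $(0,p_{CU})$ if $(1,0)$, $(p_{CU},1)$ if $(1,1)$. The latent-variable proposal from the current state $\bm{X}$ is: (Step 1) sample $\bm{U}$ with independent entries $u_{t,j}\sim\mathrm{Unif}(a_{t,j},b_{t,j})$, bounds computed from $\bm{X}$; denote this density by $q(\bm{U}\mid\bm{\theta},\bm{X})$. (Step 2) choose one pair $(t',j')$ with probability $(1+a_{t',j'}-b_{t',j'})/\sum_{t=0}^T\sum_{j=1}^N(1+a_{t,j}-b_{t,j})$, sample $u^\ast_{t',j'}\sim\mathrm{Unif}\big((0,1)\setminus(a_{t',j'},b_{t',j'})\big)$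 and set $u^\ast_{t,j}=u_{t,j}$ for all other $(t,j)$; denote the density of this step by $q(\bm{U}^\ast\mid\bm{\theta},\bm{U})$ (bounds computed from $f(\bm{U},\bm{\theta})$). (Step 3) set $\bm{X}^\ast=f(\bm{U}^\ast,\bm{\theta})$; denote by $q(\bm{X}^\ast\mid\bm{\theta},\bm{U}^\ast)$ the (degenerate) distribution of this step, equal to $1$ if $\bm{X}^\ast=f(\bm{U}^\ast,\bm{\theta})$ and $0$ otherwise. The reverse move uses the same three steps from $\bm{X}^\ast$, i.e. the densities $q(\bm{U}^\ast\mid\bm{\theta},\bm{X}^\ast)$, $q(\bm{U}\mid\bm{\theta},\bm{U}^\ast)$, $q(\bm{X}\mid\bm{\theta},\bm{U})$. Then the Metropolis–Hastings acceptance probability of $\bm{X}^\ast$, \[ \alpha(\bm{X},\bm{X}^\ast)=\min\left\{1,\frac{\pi(\bm{X}^\ast\mid\bm{\theta},\bm{Y})}{\pi(\bm{X}\mid\bm{\theta},\bm{Y})}\cdot\frac{q(\bm{U}^\ast\mid\bm{\theta},\bm{X}^\ast)\,q(\bm{U}\mid\bm{\theta},\bm{U}^\ast)\,q(\bm{X}\mid\bm{\theta},\bm{U})}{q(\bm{U}\mid\bm{\theta},\bm{X})\,q(\bm{U}^\ast\mid\bm{\theta},\bm{U})\,q(\bm{X}^\ast\mid\bm{\theta},\bm{U}^\ast)}\right\}, \] simplifies to \[ \alpha(\bm{X},\bm{X}^\ast)=\min\left\{1,\frac{\pi(\bm{Y}\mid\bm{X}^\ast,\bm{\theta})}{\pi(\bm{Y}\mid\bm{X},\bm{\theta})}\cdot\frac{q(\bm{U}\mid\bm{\theta},\bm{U}^\ast)}{q(\bm{U}^\ast\mid\bm{\theta},\bm{U})}\right\}.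 \]
   Context: This is the latent-variable update (''Rippler'' algorithm) within a Metropolis-within-Gibbs sampler targeting $\pi(\bm{\theta},\bm{X}\mid\bm{Y})$; the parameters $\bm{\theta}$ are held fixed during this update. The acceptance probability $\alpha(\bm{X},\bm{X}^\ast)$ is the usual Metropolis–Hastings ratio $\min\{1,\pi(\bm{X}^\ast\mid\bm{\theta},\bm{Y})q(\bm{X}\mid\bm{\theta},\bm{X}^\ast)/(\pi(\bm{X}\mid\bm{\theta},\bm{Y})q(\bm{X}^\ast\mid\bm{\theta},\bm{X}))\}$, where the forward proposal density is taken to be the product of the three step densities $q(\bm{U}\mid\bm{\theta},\bm{X})q(\bm{U}^\ast\mid\bm{\theta},\bm{U})q(\bm{X}^\ast\mid\bm{\theta},\bm{U}^\ast)$ and the reverse proposal density is $q(\bm{U}^\ast\mid\bm{\theta},\bm{X}^\ast)q(\bm{U}\mid\bm{\theta},\bm{U}^\ast)q(\bm{X}\mid\bm{\theta},\bm{U})$. *)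

(* Defs.v *)
From HB Require Import structures.
From mathcomp Require Import all_boot all_order all_algebra.
From mathcomp Require Import reals.
From mathcomp Require Import sequences exp.
Set Implicit Arguments. Unset Strict Implicit. Unset Printing Implicit Defensive.
Import Order.TTheory GRing.Theory Num.Theory.
Local Open Scope ring_scope.

Record model (R : realType) (Theta : Type) (T N : nat) := Model {
  Delta : R;
  gamma : R;
  p0 : R;
  lam : 'I_N -> nat -> 'rV[bool]_N -> Theta -> R;
  se : R;
  sp : R
}.

Section Defs.
Variables (R : realType) (Theta : Type) (T N : nat).
Implicit Types (M : model R Theta T N) (X : 'M[bool]_(T.+1, N)) (U : 'M[R]_(T.+1, N)).

Definition bern (p : R) (b : bool) : R := if b then p else 1 - p.

Definition pCU M : R := 1 - expR (- (gamma M * Delta M)).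
Definition pUC M (theta : Theta) (j : 'I_N) (t : nat) (xprev : 'rV[bool]_N) : R :=
  1 - expR (- (lam M j t xprev theta * Delta M)).

Definition prevrow X (t : 'I_T.+1) : 'rV[bool]_N := row (inord t.-1) X.

Definition prior M theta X : R :=
  \prod_(t < T.+1) \prod_(j < N)
    (if t == 0 :> nat then bern (p0 M) (X t j)
     else if prevrow X t 0 j then bern (expR (- (gamma M * Delta M))) (X t j)
     else bern (pUC M theta j t (prevrow X t)) (X t j)).

Definition obs M (x y : bool) : R := if x then bern (se M) y else bern (1 - sp M) y.

Definition lik M (tested : 'I_T.+1 -> 'I_N -> bool) (Y : 'M[bool]_(T.+1, N)) X : R :=
  \prod_(t < T.+1) \prod_(j < N | tested t j) obs M (X t j) (Y t j).

Definition post M theta tested Y X : R :=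
  lik M tested Y X * prior M theta X /
  \sum_(X' : 'M[bool]_(T.+1, N)) (lik M tested Y X' * prior M theta X').

Fixpoint fstate M theta U (t : nat) : 'rV[bool]_N :=
  match t with
  | 0 => \row_j (U (inord 0) j < p0 M)
  | t'.+1 => let xp := fstate M theta U t' in
      \row_j (if xp 0 j then ~~ (U (inord t'.+1) j < pCU M)
              else U (inord t'.+1) j < pUC M theta j t'.+1 xp)
  end.

Definition fmap M theta U : 'M[bool]_(T.+1, N) :=
  \matrix_(t < T.+1, j < N) fstate M theta U t 0 j.

Definition bounds M theta X (t : 'I_T.+1) (j : 'I_N) : R * R :=
  if t == 0 :> nat then (if X t j then (0, p0 M) else (p0 M, 1))
  else let xp := prevrow X t in
    if xp 0 j then (if X t j then (pCU M, 1) else (0, pCU M))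
    else let p := pUC M theta j t xp in
      if X t j then (0, p) else (p, 1).

(* Step 1 density q(U | theta, X): independent Unif(a,b) (version of the
   density with indicator of [a,b)) *)
Definition q1 M theta U X : R :=
  \prod_(t < T.+1) \prod_(j < N)
    (let ab := bounds M theta X t j in
     if (ab.1 <= U t j < ab.2) then (ab.2 - ab.1)^-1 else 0).

(* Step 2 density q(Us | theta, U), w.r.t. the measure
   sum over (t,j) of (Lebesgue in coordinate (t,j)) x (Dirac at U elsewhere);
   bounds computed from f(U, theta). *)
Definition q2 M theta (Us U : 'M[R]_(T.+1, N)) : R :=
  let X := fmap M theta U in
  let S := \sum_(t < T.+1) \sum_(j < N)
             (1 + (bounds M theta X t j).1 - (bounds M theta X t j).2) in
  \sum_(t < T.+1) \sum_(j < N)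
    (let ab := bounds M theta X t j in
     if [&& [forall t2 : 'I_T.+1, forall j2 : 'I_N,
               ((t2, j2) != (t, j)) ==> (Us t2 j2 == U t2 j2)],
            (0 < Us t j < 1) & ~~ (ab.1 < Us t j < ab.2)]
     then ((1 + ab.1 - ab.2) / S) * (1 - (ab.2 - ab.1))^-1
     else 0).

Definition q3 M theta (Xs : 'M[bool]_(T.+1, N)) (Us : 'M[R]_(T.+1, N)) : R :=
  if Xs == fmap M theta Us then 1 else 0.

End Defs.

(* Main.v *)
Require Import Defs.
From HB Require Import structures.
From mathcomp Require Import all_boot all_order all_algebra.
From mathcomp Require Import reals.
From mathcomp Require Import sequences exp.
From mathcomp Require Import ring lra.
Import Order.TTheory GRing.Theory Num.Theory.
Local Open Scope ring_scope.

Lemma expN_in {R : realType} (x : R) : 0 < x -> 0 < expR (- x) < 1.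
Proof. by move=> hx; rewrite expR_gt0 expR_lt1 oppr_lt0. Qed.

Lemma bounds_range (R : realType) (Theta : Type) (T N : nat)
  (M : model R Theta T N) (theta : Theta) X t j :
  0 < Delta M -> 0 < gamma M -> 0 < p0 M < 1 ->
  (forall j t xp, 0 < lam M j t xp theta) ->
  let ab := bounds M theta X t j in 0 <= ab.1 /\ ab.1 < ab.2 /\ ab.2 <= 1.
Proof.
move=> hD hg /andP[hp0 hp1] hl /=.
have hCU : 0 < pCU M < 1.
  have /andP[h1 h2] := expN_in _ (mulr_gt0 hg hD).
  by rewrite /pCU; apply/andP; split; lra.
have hUC : forall j t xp, 0 < pUC M theta j t xp < 1.
  move=> j' t' xp; have /andP[h1 h2] := expN_in _ (mulr_gt0 (hl j' t' xp) hD).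
  by rewrite /pUC; apply/andP; split; lra.
move: hCU => /andP[c1 c2].
rewrite /bounds; case: ifP => _.
  by case: (X t j) => /=; lra.
have /andP[u1 u2] := hUC j t (prevrow X t).
by case: (prevrow X t 0 j); case: (X t j) => /=; lra.
Qed.

Lemma prior_bounds (R : realType) (Theta : Type) (T N : nat)
  (M : model R Theta T N) (theta : Theta) X :
  prior M theta X = \prod_(t < T.+1) \prod_(j < N)
     ((bounds M theta X t j).2 - (bounds M theta X t j).1).
Proof.
apply: eq_bigr => t _; apply: eq_bigr => j _.
rewrite /bounds /bern /pCU; case: ifP => _.
  by case: (X t j) => /=; ring.
by case: (prevrow X t 0 j); case: (X t j) => /=; ring.
Qed.

Definition inb {R : realType} (ab : R * R) (u : R) : bool := (ab.1 <= u) && (u < ab.2).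

Lemma q1_pos_in (R : realType) (Theta : Type) (T N : nat)
  (M : model R Theta T N) (theta : Theta) (U : 'M[R]_(T.+1,N)) (X : 'M[bool]_(T.+1,N)) :
  0 < q1 M theta U X -> forall t j, inb (bounds M theta X t j) (U t j).
Proof.
move=> hq t j; apply/negPn/negP => hb.
move: hq; rewrite /q1 (bigD1 t) //= (bigD1 j) //=.
by rewrite /inb in hb; rewrite ifN // !mul0r ltxx.
Qed.

Lemma q1_in (R : realType) (Theta : Type) (T N : nat)
  (M : model R Theta T N) (theta : Theta) (U : 'M[R]_(T.+1,N)) (X : 'M[bool]_(T.+1,N)) :
  (forall t j, inb (bounds M theta X t j) (U t j)) ->
  q1 M theta U X = (prior M theta X)^-1.
Proof.
move=> h; rewrite prior_bounds -prodfV /q1; apply: eq_bigr => t _.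
rewrite -prodfV; apply: eq_bigr => j _ /=.
by have := h t j; rewrite /inb => ->.
Qed.

Lemma inord_eq (T : nat) (k : nat) (hk : (k < T.+1)%N) : (inord k : 'I_T.+1) = Ordinal hk.
Proof. by apply/val_inj; rewrite /= inordK. Qed.

Lemma fmap_of_in (R : realType) (Theta : Type) (T N : nat)
  (M : model R Theta T N) (theta : Theta) (U : 'M[R]_(T.+1,N)) (X : 'M[bool]_(T.+1,N)) :
  (forall t j, inb (bounds M theta X t j) (U t j)) -> X = fmap M theta U.
Proof.
move=> h.
have key : forall t, (t < T.+1)%N -> forall j, X (inord t) j = fstate M theta U t 0 j.
  elim=> [|t IH] ht j.
    have := h (inord 0) j; rewrite /inb /bounds inordK //= mxE.
    by case: (X (inord 0) j) => /= /andP[h1 h2]; [rewrite h2| rewrite ltNge h1].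
  have hrow : prevrow X (inord t.+1) = fstate M theta U t.
    apply/rowP => k; rewrite /prevrow mxE inordK //= IH //.
    exact: ltnW.
  have := h (inord t.+1) j; rewrite /inb /bounds inordK //= hrow mxE /=.
  case: (fstate M theta U t 0 j); case: (X (inord t.+1) j) => /= /andP[h1 h2].
  - by rewrite -leNgt h1.
  - by rewrite h2.
  - by rewrite h2.
  - by rewrite ltNge h1.
apply/matrixP => t j; rewrite mxE -key // inord_val //.
Qed.

Lemma in_fmap (R : realType) (Theta : Type) (T N : nat)
  (M : model R Theta T N) (theta : Theta) (U : 'M[R]_(T.+1,N)) :
  (forall t j, 0 <= U t j < 1) ->
  forall t j, inb (bounds M theta (fmap M theta U) t j) (U t j).
Proof.
move=> h [[|t] ht] j; have /andP[u0 u1] := h (Ordinal ht) j.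
  rewrite /inb /bounds /= !mxE /= ?inord_eq.
  by case: ifP => hu /=; [rewrite u0 hu | rewrite leNgt hu u1].
have hrow : prevrow (fmap M theta U) (Ordinal ht) = fstate M theta U t.
  apply/rowP => k; rewrite /prevrow mxE mxE inordK //=.
  exact: ltnW.
have E : fmap M theta U (Ordinal ht) j =
  (if fstate M theta U t 0 j then ~~ (U (Ordinal ht) j < pCU M)
   else U (Ordinal ht) j < pUC M theta j t.+1 (fstate M theta U t)).
  by rewrite mxE /= mxE inord_eq.
rewrite /inb /bounds hrow E.
have -> : (nat_of_ord (Ordinal ht) == 0%N) = false by [].
set xp := fstate M theta U t.
case: (xp 0 j) => /=.
  by case: (boolP (U (Ordinal ht) j < pCU M)) => hu /=; [rewrite u0 hu | rewrite leNgt hu u1].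
by case: (boolP (U (Ordinal ht) j < pUC M theta j t.+1 xp)) => hu /=; [rewrite u0 hu | rewrite leNgt hu u1].
Qed.

Arguments bounds_range {R Theta T N M theta}.
Arguments q1_pos_in {R Theta T N M theta U X}.
Arguments q1_in {R Theta T N M theta U X}.
Arguments fmap_of_in {R Theta T N M theta U X}.
Arguments in_fmap {R Theta T N M theta U}.

Theorem proposition1 (R : realType) (Theta : Type) (T N : nat)
  (M : model R Theta T N) (theta : Theta)
  (tested : 'I_T.+1 -> 'I_N -> bool) (Y : 'M[bool]_(T.+1, N))
  (X Xs : 'M[bool]_(T.+1, N)) (U Us : 'M[R]_(T.+1, N)) :
  0 < Delta M -> 0 < gamma M -> 0 < p0 M < 1 ->
  (forall j t xp, 0 < lam M j t xp theta) ->
  0 <= se M <= 1 -> 0 <= sp M <= 1 ->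
  0 < post M theta tested Y X ->
  0 < q1 M theta U X ->
  0 < q2 M theta Us U ->
  Xs = fmap M theta Us ->
  Num.min 1
    (post M theta tested Y Xs / post M theta tested Y X *
     ((q1 M theta Us Xs * q2 M theta U Us * q3 M theta X U) /
      (q1 M theta U X * q2 M theta Us U * q3 M theta Xs Us)))
  = Num.min 1
    (lik M tested Y Xs / lik M tested Y X *
     (q2 M theta U Us / q2 M theta Us U)).
Proof.
move=> hD hg hp hl _ _ hpost hq1 hq2 hXs.
have hin := q1_pos_in hq1.
have hU : forall t j, 0 <= U t j < 1.
  move=> t j; have := hin t j; rewrite /inb.
  have [h1 [h2 h3]] := bounds_range X t j hD hg hp hl.
  case/andP => a b; apply/andP; split; lra.
have hUs : forall t j, 0 <= Us t j < 1.
  move=> t0 j0; apply/negPn/negP => hb.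
  suff : q2 M theta Us U = 0 by move=> h; move: hq2; rewrite h ltxx.
  rewrite /q2 /=; apply: big1 => t _; apply: big1 => j _.
  case: ifP => // /and3P[hf h01 _]; exfalso.
  case: (eqVneq (t, j) (t0, j0)) => [[e1 e2] | hne].
    subst; move: h01 hb => /andP[a b]; rewrite (ltW a) b //.
  have := implyP (forallP (forallP hf t0) j0); rewrite eq_sym hne => /(_ isT) /eqP e.
  by move: hb; rewrite e hU.
have eX : X = fmap M theta U := fmap_of_in hin.
have q1X := q1_in hin.
have q1Xs : q1 M theta Us Xs = (prior M theta Xs)^-1.
  by apply: q1_in; rewrite hXs; apply: in_fmap.
have q3X : q3 M theta X U = 1 by rewrite /q3 -eX eqxx.
have q3Xs : q3 M theta Xs Us = 1 by rewrite /q3 -hXs eqxx.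
have prior_pos : forall Z, 0 < prior M theta Z.
  move=> Z; rewrite prior_bounds; apply: prodr_gt0 => t _; apply: prodr_gt0 => j _.
  have [h1 [h2 h3]] := bounds_range Z t j hD hg hp hl; lra.
have hP := prior_pos X; have hPs := prior_pos Xs.
move: hpost; rewrite /post.
set L := lik M tested Y X; set Ls := lik M tested Y Xs.
set Z := \sum_(X' : 'M[bool]_(T.+1, N)) _.
move=> hpost.
have hZ : Z != 0 by apply: contraTneq hpost => ->; rewrite invr0 mulr0 ltxx.
have hL : L != 0 by apply: contraTneq hpost => ->; rewrite !mul0r ltxx.
have hq2n : q2 M theta Us U != 0 by rewrite gt_eqF.
rewrite q1X q1Xs q3X q3Xs; congr (Num.min 1 _).
field; rewrite ?hZ ?hL ?hq2n ?gt_eqF //.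
Qed.
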